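(* Let $H$ be a Hermitian $n\times n$ matrix (e.g. the adjacency matrix of an undirected graph on $n$ vertices) and let $\omega\in(0,1]$. Consider the evolution $$\frac{d}{dt}\varrho=-\mathrm i(1-\omega)[H,\varrho]+\omega\Big(H\varrho H^\dagger-\tfrac12\{H^\dagger H,\varrho\}\Big),$$ i.e. the GKSL equation with the single Lindblad operator $H$. Then: (i) its stationary states are exactly the stationary states of the pure Hamiltonian evolution $\frac{d}{dt}\varrho=-\mathrm i[H,\varrho]$ (i.e. the density matrices commuting with $H$); (ii) the evolution is convergent, i.e. for every initial density matrix $\varrho_0$ the limit $\lim_{t\to\infty}\varrho_t$ exists; (iii) the evolution is not relaxing (has more than one stationary state) if and only if $n>1$.
   Context: A stationary state is a density matrix $\varrho$ for which the right-hand side vanishes. The evolution is relaxing if there is a unique stationary state. $\{A,B\}=AB+BA$. *)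

(* Defs.v *)
From Stdlib Require Import Reals.
Open Scope R_scope.

Record C := mkC { Re : R ; Im : R }.
Definition C0 : C := mkC 0 0.
Definition C1 : C := mkC 1 0.
Definition Ci : C := mkC 0 1.
Definition RtoC (r : R) : C := mkC r 0.
Definition Cadd (x y : C) : C := mkC (Re x + Re y) (Im x + Im y).
Definition Copp (x : C) : C := mkC (- Re x) (- Im x).
Definition Cmul (x y : C) : C :=
  mkC (Re x * Re y - Im x * Im y) (Re x * Im y + Im x * Re y).
Definition Cconj (x : C) : C := mkC (Re x) (- Im x).
Definition Cnorm (x : C) : R := sqrt (Re x ^ 2 + Im x ^ 2).

Fixpoint Csum (n : nat) (f : nat -> C) : C :=
  match n with
  | O => C0
  | S m => Cadd (Csum m f) (f m)
  end.

(* ---------- n x n complex matrices ----------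
   A matrix is a function of (row, column); only entries with indices < n
   are meaningful; all notions below only look at those entries. *)
Definition Mat := nat -> nat -> C.
Definition mzero : Mat := fun _ _ => C0.
Definition madd (A B : Mat) : Mat := fun i j => Cadd (A i j) (B i j).
Definition mopp (A : Mat) : Mat := fun i j => Copp (A i j).
Definition mscale (c : C) (A : Mat) : Mat := fun i j => Cmul c (A i j).
Definition mmul (n : nat) (A B : Mat) : Mat :=
  fun i j => Csum n (fun k => Cmul (A i k) (B k j)).
Definition adj (A : Mat) : Mat := fun i j => Cconj (A j i).
Definition comm (n : nat) (A B : Mat) : Mat := madd (mmul n A B) (mopp (mmul n B A)).
Definition anticomm (n : nat) (A B : Mat) : Mat := madd (mmul n A B) (mmul n B A).
Definition trace (n : nat) (A : Mat) : C := Csum n (fun i => A i i).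

Definition meq (n : nat) (A B : Mat) : Prop :=
  forall i j, (i < n)%nat -> (j < n)%nat -> A i j = B i j.

Definition hermitian (n : nat) (A : Mat) : Prop := meq n A (adj A).

Definition psd (n : nat) (A : Mat) : Prop :=
  forall v : nat -> C,
    0 <= Re (Csum n (fun i => Cmul (Cconj (v i)) (Csum n (fun j => Cmul (A i j) (v j))))).

Definition density (n : nat) (rho : Mat) : Prop :=
  hermitian n rho /\ psd n rho /\ trace n rho = C1.

Definition gksl (n : nat) (w : R) (H : Mat) (rho : Mat) : Mat :=
  madd (mscale (Cmul (Copp Ci) (RtoC (1 - w))) (comm n H rho))
       (mscale (RtoC w)
          (madd (mmul n (mmul n H rho) (adj H))
                (mscale (RtoC (- (1/2))) (anticomm n (mmul n (adj H) H) rho)))).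

Definition ham (n : nat) (H : Mat) (rho : Mat) : Mat :=
  mscale (Copp Ci) (comm n H rho).

Definition stationary (n : nat) (L : Mat -> Mat) (rho : Mat) : Prop :=
  density n rho /\ meq n (L rho) mzero.

Definition relaxing (n : nat) (L : Mat -> Mat) : Prop :=
  exists rho, stationary n L rho /\
    forall sigma, stationary n L sigma -> meq n sigma rho.

Definition is_solution (n : nat) (L : Mat -> Mat) (rho : R -> Mat) : Prop :=
  forall t i j, (i < n)%nat -> (j < n)%nat ->
    derivable_pt_lim (fun s => Re (rho s i j)) t (Re (L (rho t) i j)) /\
    derivable_pt_lim (fun s => Im (rho s i j)) t (Im (L (rho t) i j)).

Definition converges (n : nat) (rho : R -> Mat) : Prop :=
  exists Linf : Mat, forall eps, eps > 0 -> exists T, forall t, t > T ->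
    forall i j, (i < n)%nat -> (j < n)%nat ->
      Cnorm (Cadd (rho t i j) (Copp (Linf i j))) < eps.

(* Main.v *)
Require Import Defs.
From Stdlib Require Import Reals Lra Lia.
Open Scope R_scope.

Module p1.

Lemma dmul f g x df dg : derivable_pt_lim f x df -> derivable_pt_lim g x dg ->
  derivable_pt_lim (fun t => f t * g t) x (df * g x + f x * dg).
Proof. intros; apply (derivable_pt_lim_mult f g); auto. Qed.
Lemma dadd f g x df dg : derivable_pt_lim f x df -> derivable_pt_lim g x dg ->
  derivable_pt_lim (fun t => f t + g t) x (df + dg).
Proof. intros; apply (derivable_pt_lim_plus f g); auto. Qed.
Lemma dsub f g x df dg : derivable_pt_lim f x df -> derivable_pt_lim g x dg ->
  derivable_pt_lim (fun t => f t - g t) x (df - dg).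
Proof. intros; apply (derivable_pt_lim_minus f g); auto. Qed.
Lemma dval f x l l' : derivable_pt_lim f x l -> l = l' -> derivable_pt_lim f x l'.
Proof. intros; subst; auto. Qed.
Lemma dlin k x : derivable_pt_lim (fun t => k * t) x k.
Proof.
  apply dval with (k * 1); [|ring].
  apply (derivable_pt_lim_scal id k x 1), derivable_pt_lim_id.
Qed.
Lemma dexpl k x : derivable_pt_lim (fun t => exp (k * t)) x (k * exp (k * x)).
Proof.
  apply dval with (exp (k*x) * k); [|ring].
  apply (derivable_pt_lim_comp (fun t => k * t) exp); [apply dlin|apply derivable_pt_lim_exp].
Qed.
Lemma dcosl k x : derivable_pt_lim (fun t => cos (k * t)) x (- k * sin (k * x)).
Proof.
  apply dval with (- sin (k*x) * k); [|ring].
  apply (derivable_pt_lim_comp (fun t => k * t) cos); [apply dlin|apply derivable_pt_lim_cos].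
Qed.
Lemma dsinl k x : derivable_pt_lim (fun t => sin (k * t)) x (k * cos (k * x)).
Proof.
  apply dval with (cos (k*x) * k); [|ring].
  apply (derivable_pt_lim_comp (fun t => k * t) sin); [apply dlin|apply derivable_pt_lim_sin].
Qed.

Lemma d0_const f : (forall t, derivable_pt_lim f t 0) -> forall t, f t = f 0.
Proof.
  intros hf t. destruct (Rtotal_order t 0) as [h|[h|h]].
  - destruct (MVT_cor2 f (fun _ => 0) t 0 h) as [c [hc _]].
    { intros; apply hf. } lra.
  - subst; auto.
  - destruct (MVT_cor2 f (fun _ => 0) 0 t h) as [c [hc _]].
    { intros; apply hf. } lra.
Qed.

Lemma ode2 (u v : R -> R) a b :
  (forall t, derivable_pt_lim u t (a * u t - b * v t) /\
             derivable_pt_lim v t (b * u t + a * v t)) ->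
  forall t, u t = exp (a * t) * (u 0 * cos (b * t) - v 0 * sin (b * t)) /\
            v t = exp (a * t) * (u 0 * sin (b * t) + v 0 * cos (b * t)).
Proof.
  intros H.
  set (g1 := fun t => exp (-a * t) * (cos (b * t) * u t + sin (b * t) * v t)).
  set (g2 := fun t => exp (-a * t) * (cos (b * t) * v t - sin (b * t) * u t)).
  assert (h1 : forall t, derivable_pt_lim g1 t 0).
  { intro t; destruct (H t) as [hu hv]; unfold g1.
    eapply dval.
    - apply dmul; [apply dexpl|]. apply dadd; (apply dmul; [first [apply dcosl | apply dsinl] | eassumption]).
    - cbv beta. ring. }
  assert (h2 : forall t, derivable_pt_lim g2 t 0).
  { intro t; destruct (H t) as [hu hv]; unfold g2.
    eapply dval.
    - apply dmul; [apply dexpl|]. apply dsub; (apply dmul; [first [apply dcosl | apply dsinl] | eassumption]).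
    - cbv beta. ring. }
  intro t.
  pose proof (d0_const g1 h1 t) as e1. pose proof (d0_const g2 h2 t) as e2.
  unfold g1, g2 in e1, e2.
  rewrite !Rmult_0_r, cos_0, sin_0, exp_0 in e1, e2.
  assert (hE : exp (a * t) * exp (- a * t) = 1).
  { rewrite <- exp_plus. replace (a * t + - a * t) with 0 by ring. apply exp_0. }
  pose proof (sin2_cos2 (b * t)) as hsc. unfold Rsqr in hsc.
  set (E := exp (-a * t)) in *. set (c := cos (b * t)) in *. set (s := sin (b * t)) in *.
  set (F := exp (a * t)) in *.
  assert (e1' : E * (c * u t + s * v t) = u 0) by (rewrite e1; ring).
  assert (e2' : E * (c * v t - s * u t) = v 0) by (rewrite e2; ring).
  clear e1 e2. rename e1' into e1. rename e2' into e2.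
  split.
  - rewrite <- e1, <- e2. replace (u t) with (u t * (F * E) * (s * s + c * c)) at 1 by (rewrite hE, hsc; ring). ring.
  - rewrite <- e1, <- e2. replace (v t) with (v t * (F * E) * (s * s + c * c)) at 1 by (rewrite hE, hsc; ring). ring.
Qed.

Definition cv (f : R -> R) (l : R) : Prop :=
  forall eps, 0 < eps -> exists T, forall t, T < t -> Rabs (f t - l) < eps.

Lemma cv_const c : cv (fun _ => c) c.
Proof. intros e he; exists 0; intros; rewrite Rminus_diag, Rabs_R0; auto. Qed.

Lemma cv_plus f g lf lg : cv f lf -> cv g lg -> cv (fun t => f t + g t) (lf + lg).
Proof.
  intros hf hg e he.
  destruct (hf (e/2)) as [T1 h1]; [lra|]. destruct (hg (e/2)) as [T2 h2]; [lra|].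
  exists (Rmax T1 T2); intros t ht.
  assert (T1 < t) by (eapply Rle_lt_trans; [apply Rmax_l|eauto]).
  assert (T2 < t) by (eapply Rle_lt_trans; [apply Rmax_r|eauto]).
  specialize (h1 t H); specialize (h2 t H0).
  replace (f t + g t - (lf + lg)) with ((f t - lf) + (g t - lg)) by ring.
  eapply Rle_lt_trans; [apply Rabs_triang|lra].
Qed.

Lemma cv_scal c f l : cv f l -> cv (fun t => c * f t) (c * l).
Proof.
  intros hf e he.
  destruct (hf (e / (Rabs c + 1))) as [T h].
  { apply Rdiv_lt_0_compat; [auto|]. pose proof (Rabs_pos c); lra. }
  exists T; intros t ht. specialize (h t ht).
  replace (c * f t - c * l) with (c * (f t - l)) by ring.
  rewrite Rabs_mult.
  pose proof (Rabs_pos c). pose proof (Rabs_pos (f t - l)).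
  assert (Rabs c * Rabs (f t - l) <= Rabs c * (e / (Rabs c + 1))).
  { apply Rmult_le_compat_l; lra. }
  assert (Rabs c * (e / (Rabs c + 1)) < e).
  { apply Rmult_lt_reg_r with (Rabs c + 1); [lra|].
    field_simplify; lra. }
  lra.
Qed.

Lemma cv_ext f g l : (forall t, f t = g t) -> cv f l -> cv g l.
Proof. intros h hf e he; destruct (hf e he) as [T hT]; exists T; intros; rewrite <- h; auto. Qed.

Lemma cv_ext_l f l l' : cv f l -> l = l' -> cv f l'.
Proof. intros; subst; auto. Qed.

Lemma exp_small a eps M : a < 0 -> 0 < eps -> 0 < M ->
  exists T, forall t, T < t -> exp (a * t) * M < eps.
Proof.
  intros ha he hM. exists (ln (eps / M) / a). intros t ht.
  assert (h1 : a * t < ln (eps / M)).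
  { replace (ln (eps / M)) with (a * (ln (eps / M) / a)) by (field; lra).
    apply Rmult_lt_gt_compat_neg_l; auto. }
  apply exp_increasing in h1. rewrite exp_ln in h1 by (apply Rdiv_lt_0_compat; auto).
  apply Rmult_lt_reg_r with (/ M); [apply Rinv_0_lt_compat; auto|].
  replace (exp (a * t) * M * / M) with (exp (a * t)) by (field; lra).
  exact h1.
Qed.

Lemma mu_R0 w x h : h + h = 1 -> w * (x * x - h * (x * x + x * x)) = 0.
Proof. intro hh; replace h with (1/2) by lra. field. Qed.
Lemma mu_Rneg w x y h : h + h = 1 -> 0 < w -> x <> y -> w * (x * y - h * (x * x + y * y)) < 0.
Proof.
  intros hh hw hxy. replace h with (1/2) by lra. assert (0 < (x - y) * (x - y)).
  { assert (x - y <> 0) by lra. nra. }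
  nra.
Qed.
Lemma mu_I0 w x : - ((1 - w) * (x - x)) = 0.
Proof. ring. Qed.

Lemma ode2_cv (u v : R -> R) a b :
  (forall t, derivable_pt_lim u t (a * u t - b * v t) /\
             derivable_pt_lim v t (b * u t + a * v t)) ->
  (a < 0 -> cv u 0 /\ cv v 0) /\ (a = 0 /\ b = 0 -> cv u (u 0) /\ cv v (v 0)).
Proof.
  intros H. pose proof (ode2 u v a b H) as hs. split.
  - intro ha.
    assert (key : forall (f : R -> R) p q, (forall t, f t = exp (a * t) * p t) ->
              (forall t, Rabs (p t) <= q) -> cv f 0).
    { intros f p q hf hp e he.
      destruct (exp_small a e (q + 1) ha he) as [T hT].
      { pose proof (hp 0); pose proof (Rabs_pos (p 0)); lra. }
      exists T; intros t ht. rewrite Rminus_0_r, hf, Rabs_mult, Rabs_right.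
      2: { apply Rle_ge, Rlt_le, exp_pos. }
      specialize (hT t ht). pose proof (hp t). pose proof (exp_pos (a * t)).
      assert (exp (a * t) * Rabs (p t) <= exp (a * t) * q) by (apply Rmult_le_compat_l; lra).
      nra. }
    split.
    + apply (key u (fun t => u 0 * cos (b * t) - v 0 * sin (b * t)) (Rabs (u 0) + Rabs (v 0))).
      * intro t; apply (proj1 (hs t)).
      * intro t. unfold Rminus. eapply Rle_trans; [apply Rabs_triang|].
        rewrite Rabs_Ropp, !Rabs_mult. pose proof (COS_bound (b*t)). pose proof (SIN_bound (b*t)).
        pose proof (Rabs_pos (u 0)). pose proof (Rabs_pos (v 0)).
        assert (Rabs (cos (b*t)) <= 1) by (apply Rabs_le; lra).
        assert (Rabs (sin (b*t)) <= 1) by (apply Rabs_le; lra).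
        pose proof (Rabs_pos (cos (b*t))). pose proof (Rabs_pos (sin (b*t))).
        nra.
    + apply (key v (fun t => u 0 * sin (b * t) + v 0 * cos (b * t)) (Rabs (u 0) + Rabs (v 0))).
      * intro t; apply (proj2 (hs t)).
      * intro t. eapply Rle_trans; [apply Rabs_triang|].
        rewrite !Rabs_mult. pose proof (COS_bound (b*t)). pose proof (SIN_bound (b*t)).
        pose proof (Rabs_pos (u 0)). pose proof (Rabs_pos (v 0)).
        assert (Rabs (cos (b*t)) <= 1) by (apply Rabs_le; lra).
        assert (Rabs (sin (b*t)) <= 1) by (apply Rabs_le; lra).
        pose proof (Rabs_pos (cos (b*t))). pose proof (Rabs_pos (sin (b*t))).
        nra.
  - intros [ha hb]. subst. split.
    + apply cv_ext with (fun _ => u 0); [|apply cv_const].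
      intro t; rewrite (proj1 (hs t)), !Rmult_0_l, cos_0, sin_0, exp_0; ring.
    + apply cv_ext with (fun _ => v 0); [|apply cv_const].
      intro t; rewrite (proj2 (hs t)), !Rmult_0_l, cos_0, sin_0, exp_0; ring.
Qed.

Lemma uniformize (Q : nat -> R -> Prop) N :
  (forall k T T', T <= T' -> Q k T -> Q k T') ->
  (forall k, (k < N)%nat -> exists T, Q k T) ->
  exists T, forall k, (k < N)%nat -> Q k T.
Proof.
  intros hm. induction N as [|N IH]; intros h.
  - exists 0; intros; lia.
  - destruct IH as [T1 h1]. { intros; apply h; lia. }
    destruct (h N) as [T2 h2]; [lia|].
    exists (Rmax T1 T2); intros k hk.
    destruct (Nat.eq_dec k N) as [->|hne].
    + eapply hm; [apply Rmax_r|auto].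
    + eapply hm; [apply Rmax_l|apply h1; lia].
Qed.

Lemma norm_small x y e : Rabs x < e / 2 -> Rabs y < e / 2 -> sqrt (x ^ 2 + y ^ 2) < e.
Proof.
  intros hx hy.
  pose proof (Rabs_pos x). pose proof (Rabs_pos y).
  apply Rle_lt_trans with (Rabs x + Rabs y); [|lra].
  rewrite <- (sqrt_pow2 (Rabs x + Rabs y)) by lra.
  apply sqrt_le_1_alt.
  rewrite <- (pow2_abs x), <- (pow2_abs y).
  nra.
Qed.

Lemma cv2_norm (u v : R -> R) lu lv : cv u lu -> cv v lv ->
  forall e, 0 < e -> exists T, forall t, T < t -> sqrt ((u t - lu) ^ 2 + (v t - lv) ^ 2) < e.
Proof.
  intros hu hv e he.
  destruct (hu (e/2)) as [T1 h1]; [lra|]. destruct (hv (e/2)) as [T2 h2]; [lra|].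
  exists (Rmax T1 T2); intros t ht.
  assert (T1 < t) by (eapply Rle_lt_trans; [apply Rmax_l|eauto]).
  assert (T2 < t) by (eapply Rle_lt_trans; [apply Rmax_r|eauto]).
  apply norm_small; auto.
Qed.

End p1.
Import p1.

From HB Require structures.
From mathcomp Require all_boot all_order all_algebra complex Rstruct.
From mathcomp Require spectral sesquilinear.
From mathcomp Require ring lra.

Module Dev.
Import HB.structures.
Import mathcomp.boot.all_boot mathcomp.order.all_order mathcomp.algebra.all_algebra.
Import mathcomp.real_closed.complex mathcomp.reals_stdlib.Rstruct.
Import mathcomp.algebra.spectral mathcomp.algebra.sesquilinear.
Import mathcomp.algebra_tactics.ring mathcomp.algebra_tactics.lra.
Import Order.TTheory GRing.Theory Num.Theory Num.Def.
Local Open Scope ring_scope.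
Local Open Scope complex_scope.
Definition K := (R[i])%type.
Definition ct {n} (M : 'M[K]_n) : 'M[K]_n := map_mx conjC (trmx M).

Lemma spec n (A : 'M[K]_n) : ct A = A ->
  exists (P : 'M[K]_n) (lam : 'I_n -> R),
    P *m ct P = 1%:M /\ ct P *m P = 1%:M /\
    A = ct P *m diag_mx (\row_i ((lam i)%:C)) *m P.
Proof.
move=> hA.
have Ah : A \is hermsymmx.
  apply/is_hermitianmxP; rewrite expr0 scale1r; by rewrite -{1}hA.
have /hermitian_normalmx /orthomx_spectralP Aeq := Ah.
have Pu := spectral_unitarymx A.
have dR := hermitian_spectral_diag_real Ah.
set P := spectralmx A in Aeq Pu.
exists P, (fun i => complex.Re (spectral_diag A 0 i)).
have h1 : P *m ct P = 1%:M by apply/unitarymxP.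
have h2 : ct P *m P = 1%:M.
  by rewrite /ct -(invmx_unitary Pu) mulVmx // unitarymx_unit.
split => //; split => //.
rewrite {1}Aeq (invmx_unitary Pu); congr (_ *m diag_mx _ *m _).
apply/rowP => i; rewrite mxE.
have /mxOverP/(_ 0 i) := dR.
case: (spectral_diag A 0 i) => a b /= hr.
move: hr => /CrealP; rewrite /conjC /=.
case=> hb; congr Complex.
have : b + b = 0 by rewrite -{1}hb addNr.
by rewrite -mulr2n => /eqP; rewrite mulrn_eq0 /= => /eqP.
Qed.

Definition phi (z : Defs.C) : K := Complex (Defs.Re z) (Defs.Im z).
Lemma phi_mul x y : phi (Cmul x y) = phi x * phi y.
Proof. case: x => a b; case: y => c d. reflexivity. Qed.
Lemma phi_add x y : phi (Cadd x y) = phi x + phi y.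
Proof. case: x => a b; case: y => c d. reflexivity. Qed.
Lemma phi_opp x : phi (Copp x) = - phi x.
Proof. case: x => a b. reflexivity. Qed.
Lemma phi_conj x : phi (Cconj x) = (phi x)^*.
Proof. case: x => a b. reflexivity. Qed.
Lemma phi_C0 : phi Defs.C0 = 0. Proof. reflexivity. Qed.
Lemma phi_C1 : phi Defs.C1 = 1. Proof. reflexivity. Qed.
Lemma phi_inj x y : phi x = phi y -> x = y.
Proof. case: x => a b; case: y => c d. by case=> -> ->. Qed.
Lemma phi_sum n f : phi (Csum n f) = \sum_(i < n) phi (f i).
Proof.
elim: n => [|n IH] /=; first by rewrite big_ord0.
by rewrite phi_add IH big_ord_recr.
Qed.

Definition toM {n} (A : Mat) : 'M[K]_n := \matrix_(i, j) phi (A i j).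

Lemma toM_mmul n A B : toM (mmul n A B) = toM A *m toM B :> 'M_n.
Proof.
apply/matrixP => i j; rewrite !mxE /mmul phi_sum.
apply: eq_bigr => k _; by rewrite phi_mul !mxE.
Qed.
Lemma toM_madd n A B : toM (madd A B) = toM A + toM B :> 'M_n.
Proof. apply/matrixP => i j; by rewrite !mxE phi_add. Qed.
Lemma toM_mopp n A : toM (mopp A) = - toM A :> 'M_n.
Proof. apply/matrixP => i j; by rewrite !mxE phi_opp. Qed.
Lemma toM_mscale n c A : toM (mscale c A) = phi c *: toM A :> 'M_n.
Proof. apply/matrixP => i j; by rewrite !mxE phi_mul. Qed.
Lemma toM_adj n A : toM (adj A) = ct (toM A) :> 'M_n.
Proof. apply/matrixP => i j; by rewrite !mxE phi_conj. Qed.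
Lemma toM_comm n A B : toM (Defs.comm n A B) = toM A *m toM B - toM B *m toM A :> 'M_n.
Proof. by rewrite /Defs.comm toM_madd toM_mopp !toM_mmul. Qed.
Lemma toM_anticomm n A B : toM (anticomm n A B) = toM A *m toM B + toM B *m toM A :> 'M_n.
Proof. by rewrite /anticomm toM_madd !toM_mmul. Qed.
Lemma toM_mzero n : toM mzero = 0 :> 'M_n.
Proof. apply/matrixP => i j; by rewrite !mxE. Qed.

Lemma meqP n A B : meq n A B <-> toM A = toM B :> 'M_n.
Proof.
split.
  move=> h; apply/matrixP => i j; rewrite !mxE.
  by rewrite (h i j (elimT ssrnat.ltP (ltn_ord i)) (elimT ssrnat.ltP (ltn_ord j))).
move=> /matrixP h i j /ssrnat.ltP hi /ssrnat.ltP hj.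
have := h (Ordinal hi) (Ordinal hj); rewrite !mxE /=; exact: phi_inj.
Qed.

Definition gkslK {n} (c1 c2 c3 : K) (Hm X : 'M[K]_n) : 'M[K]_n :=
  c1 *: (Hm *m X - X *m Hm) +
  c2 *: (Hm *m X *m ct Hm + c3 *: (ct Hm *m Hm *m X + X *m (ct Hm *m Hm))).

Lemma toM_gksl n w H rho : toM (gksl n w H rho) =
  gkslK (phi (Cmul (Copp Ci) (RtoC (1 - w)))) (phi (RtoC w)) (phi (RtoC (- (1/2))))
    (toM H) (toM rho) :> 'M_n.
Proof.
by rewrite /gksl toM_madd !toM_mscale toM_comm toM_madd toM_mscale toM_anticomm
  !toM_mmul toM_adj.
Qed.


Definition mu (c1 c2 c3 : K) (x y : R) : K :=
  c1 * (x%:C - y%:C) + c2 * (x%:C * y%:C + c3 * (x%:C * x%:C + y%:C * y%:C)).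

Section Core.
Variables (n : nat) (P Hm : 'M[K]_n) (lam : 'I_n -> R).
Hypotheses (h1 : P *m ct P = 1%:M) (h2 : ct P *m P = 1%:M)
  (hH : Hm = ct P *m diag_mx (\row_i (lam i)%:C) *m P) (hc : ct Hm = Hm).
Local Notation cj M := (P *m M *m ct P).
Local Notation D := (diag_mx (\row_i (lam i)%:C) : 'M[K]_n).
Lemma cjM M N : cj (M *m N) = cj M *m cj N.
Proof.
by rewrite !mulmxA -(mulmxA (P *m M) (ct P) P) h2 mulmx1.
Qed.
Lemma cjD M N : cj (M + N) = cj M + cj N.
Proof. by rewrite mulmxDr mulmxDl. Qed.
Lemma cjB M N : cj (M - N) = cj M - cj N.
Proof. by rewrite mulmxBr mulmxBl. Qed.
Lemma cjN M : cj (- M) = - cj M.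
Proof. by rewrite mulmxN mulNmx. Qed.
Lemma cjZ c M : cj (c *: M) = c *: cj M.
Proof. by rewrite -scalemxAr -scalemxAl. Qed.
Lemma cjH : cj Hm = D.
Proof. by rewrite hH !mulmxA h1 mul1mx -mulmxA h1 mulmx1. Qed.
Lemma cj_inj M : cj M = 0 -> M = 0.
Proof.
move=> h; have : ct P *m cj M *m P = 0 by rewrite h mulmx0 mul0mx.
by rewrite !mulmxA h2 mul1mx -mulmxA h2 mulmx1.
Qed.

Lemma core_gksl c1 c2 c3 X : cj (gkslK c1 c2 c3 Hm X) =
  \matrix_(a, b) (mu c1 c2 c3 (lam a) (lam b) * cj X a b).
Proof.
rewrite /gkslK hc !(cjZ, cjD, cjN, cjM) !cjH.
move: (P *m X *m ct P) => Y.
rewrite !mulmx_diag !(mul_diag_mx, mul_mx_diag).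
apply/matrixP => a b; rewrite !mxE /mu.
ring.
Qed.

Lemma core_comm X : cj (Hm *m X - X *m Hm) =
  \matrix_(a, b) (((lam a)%:C - (lam b)%:C) * cj X a b).
Proof.
rewrite !(cjZ, cjD, cjN, cjM) !cjH.
move: (P *m X *m ct P) => Y.
rewrite !(mul_diag_mx, mul_mx_diag).
apply/matrixP => a b; rewrite !mxE.
ring.
Qed.

End Core.

Definition c1 (w : R) := phi (Cmul (Copp Ci) (RtoC (1 - w))).
Definition c2 (w : R) := phi (RtoC w).
Definition c3 := phi (RtoC (- (1/2))).

Lemma mu_Re w x y : complex.Re (mu (c1 w) (c2 w) c3 x y) =
  Rmult w (Rminus (Rmult x y) (Rmult (1/2) (Rplus (Rmult x x) (Rmult y y)))).
Proof.
rewrite /mu /c1 /c2 /c3 /=.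
rewrite ?RmultE ?RminusE ?RplusE ?RdivE ?RoppE ?R1E ?R0E.
ring.
Qed.
Lemma mu_Im w x y : complex.Im (mu (c1 w) (c2 w) c3 x y) =
  Ropp (Rmult (Rminus 1 w) (Rminus x y)).
Proof.
rewrite /mu /c1 /c2 /c3 /=.
rewrite ?RmultE ?RminusE ?RplusE ?RdivE ?RoppE ?R1E ?R0E.
ring.
Qed.

End Dev.

Module Dev2.
Import Dev.
Import HB.structures.
Import mathcomp.boot.all_boot mathcomp.order.all_order mathcomp.algebra.all_algebra.
Import mathcomp.real_closed.complex mathcomp.reals_stdlib.Rstruct.
Import mathcomp.algebra.spectral mathcomp.algebra.sesquilinear.
Import mathcomp.algebra_tactics.ring mathcomp.algebra_tactics.lra.
Import Order.TTheory GRing.Theory Num.Theory Num.Def.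
Local Open Scope ring_scope.
Local Open Scope complex_scope.
Definition cd (f : R -> K) (t : R) (z : K) : Prop :=
  derivable_pt_lim (fun s => complex.Re (f s)) t (complex.Re z) /\
  derivable_pt_lim (fun s => complex.Im (f s)) t (complex.Im z).

Lemma cd_ext f g t z : (forall s, f s = g s) -> cd f t z -> cd g t z.
Proof.
move=> h [h1 h2]; split; (eapply derivable_pt_lim_ext; last by eassumption); move=> s /=; by rewrite h.
Qed.
Lemma cd_val f t z z' : cd f t z -> z = z' -> cd f t z'.
Proof. by move=> h <-. Qed.
Lemma cd_const c t : cd (fun _ => c) t 0.
Proof. split; exact: derivable_pt_lim_const. Qed.
Lemma cd_add f g t z z' : cd f t z -> cd g t z' -> cd (fun s => f s + g s) t (z + z').
Proof.
move=> [h1 h2] [h3 h4]; split.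
- apply: (derivable_pt_lim_ext (fun s => complex.Re (f s) + complex.Re (g s))%R).
    by move=> s; case: (f s) => a b; case: (g s).
  move: (dadd _ _ _ _ _ h1 h3). by case: z {h1 h2 h3 h4}; case: z'.
- apply: (derivable_pt_lim_ext (fun s => complex.Im (f s) + complex.Im (g s))%R).
    by move=> s; case: (f s) => a b; case: (g s).
  move: (dadd _ _ _ _ _ h2 h4). by case: z {h1 h2 h3 h4}; case: z'.
Qed.
Lemma cd_mull c f t z : cd f t z -> cd (fun s => c * f s) t (c * z).
Proof.
move=> [h1 h2]; case: c => a b; split.
- apply: (derivable_pt_lim_ext (fun s => Rminus (Rmult a (complex.Re (f s))) (Rmult b (complex.Im (f s))))).
    by move=> s; case: (f s).
  have := dsub _ _ _ _ _ (derivable_pt_lim_scal _ a _ _ h1) (derivable_pt_lim_scal _ b _ _ h2).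
  by case: z {h1 h2}.
- apply: (derivable_pt_lim_ext (fun s => Rplus (Rmult a (complex.Im (f s))) (Rmult b (complex.Re (f s))))).
    by move=> s; case: (f s).
  have := dadd _ _ _ _ _ (derivable_pt_lim_scal _ a _ _ h2) (derivable_pt_lim_scal _ b _ _ h1).
  by case: z {h1 h2}.
Qed.
Lemma cd_mulr c f t z : cd f t z -> cd (fun s => f s * c) t (z * c).
Proof.
move=> h; apply: (cd_ext (fun s => c * f s)) => [s|]; first exact: mulrC.
rewrite mulrC; exact: cd_mull.
Qed.
Lemma cd_sum (I : Type) (r : seq I) (Pr : pred I) (F : I -> R -> K) (F' : I -> K) t :
  (forall i, cd (F i) t (F' i)) ->
  cd (fun s => \sum_(i <- r | Pr i) F i s) t (\sum_(i <- r | Pr i) F' i).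
Proof.
move=> h; elim: r => [|i r IH].
  apply: (cd_ext (fun _ => 0)) => [s|]; first by rewrite big_nil.
  rewrite big_nil; exact: cd_const.
apply: (cd_ext (fun s => if Pr i then F i s + \sum_(j <- r | Pr j) F j s
                          else \sum_(j <- r | Pr j) F j s)) => [s|].
  by rewrite big_cons.
rewrite big_cons.
case: (Pr i); last exact: IH.
exact: cd_add.
Qed.

Lemma cd_lin n (A B : 'M[K]_n) (G : R -> 'M[K]_n) (G' : 'M[K]_n) t a b :
  (forall j k, cd (fun s => G s j k) t (G' j k)) ->
  cd (fun s => (A *m G s *m B) a b) t ((A *m G' *m B) a b).
Proof.
move=> h.
apply: (cd_ext (fun s => \sum_k (A *m G s) a k * B k b)) => [s|].
  by rewrite mxE.
rewrite mxE; apply: cd_sum => k; apply: cd_mulr.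
apply: (cd_ext (fun s => \sum_j A a j * G s j k)) => [s|].
  by rewrite mxE.
rewrite mxE; apply: cd_sum => j; exact: cd_mull.
Qed.


Definition cvK (f : R -> K) (l : K) : Prop :=
  p1.cv (fun s => complex.Re (f s)) (complex.Re l) /\
  p1.cv (fun s => complex.Im (f s)) (complex.Im l).

Lemma cvK_ext f g l : (forall s, f s = g s) -> cvK f l -> cvK g l.
Proof. move=> h [h1 h2]; split; (apply: cv_ext; last by eassumption); move=> s /=; by rewrite h. Qed.
Lemma cvK_const c : cvK (fun _ => c) c.
Proof. split; exact: cv_const. Qed.
Lemma cvK_add f g l l' : cvK f l -> cvK g l' -> cvK (fun s => f s + g s) (l + l').
Proof.
move=> [h1 h2] [h3 h4]; split.
- apply: (cv_ext (fun s => complex.Re (f s) + complex.Re (g s))%R).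
    by move=> s; case: (f s) => a b; case: (g s).
  move: (cv_plus _ _ _ _ h1 h3). by case: l {h1 h2 h3 h4}; case: l'.
- apply: (cv_ext (fun s => complex.Im (f s) + complex.Im (g s))%R).
    by move=> s; case: (f s) => a b; case: (g s).
  move: (cv_plus _ _ _ _ h2 h4). by case: l {h1 h2 h3 h4}; case: l'.
Qed.
Lemma cvK_mull c f l : cvK f l -> cvK (fun s => c * f s) (c * l).
Proof.
move=> [h1 h2]; case: c => a b; split.
- apply: (cv_ext (fun s => Rplus (Rmult a (complex.Re (f s))) (Rmult (Ropp b) (complex.Im (f s))))).
    by move=> s; case: (f s) => x y /=; rewrite RplusE !RmultE RoppE; ring.
  move: (cv_plus _ _ _ _ (cv_scal a _ _ h1) (cv_scal (Ropp b) _ _ h2)).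
  move/cv_ext_l; apply.
  by case: l {h1 h2} => x y /=; rewrite RplusE !RmultE RoppE; ring.
- apply: (cv_ext (fun s => Rplus (Rmult a (complex.Im (f s))) (Rmult b (complex.Re (f s))))).
    by move=> s; case: (f s).
  move: (cv_plus _ _ _ _ (cv_scal a _ _ h2) (cv_scal b _ _ h1)).
  by case: l {h1 h2}.
Qed.
Lemma cvK_mulr c f l : cvK f l -> cvK (fun s => f s * c) (l * c).
Proof.
move=> h; apply: (cvK_ext (fun s => c * f s)) => [s|]; first exact: mulrC.
rewrite mulrC; exact: cvK_mull.
Qed.
Lemma cvK_sum (I : Type) (r : seq I) (Pr : pred I) (F : I -> R -> K) (F' : I -> K) :
  (forall i, cvK (F i) (F' i)) ->
  cvK (fun s => \sum_(i <- r | Pr i) F i s) (\sum_(i <- r | Pr i) F' i).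
Proof.
move=> h; elim: r => [|i r IH].
  apply: (cvK_ext (fun _ => 0)) => [s|]; first by rewrite big_nil.
  rewrite big_nil; exact: cvK_const.
apply: (cvK_ext (fun s => if Pr i then F i s + \sum_(j <- r | Pr j) F j s
                          else \sum_(j <- r | Pr j) F j s)) => [s|].
  by rewrite big_cons.
rewrite big_cons.
case: (Pr i); last exact: IH.
exact: cvK_add.
Qed.
Lemma cvK_lin n (A B : 'M[K]_n) (G : R -> 'M[K]_n) (G' : 'M[K]_n) a b :
  (forall j k, cvK (fun s => G s j k) (G' j k)) ->
  cvK (fun s => (A *m G s *m B) a b) ((A *m G' *m B) a b).
Proof.
move=> h.
apply: (cvK_ext (fun s => \sum_k (A *m G s) a k * B k b)) => [s|].
  by rewrite mxE.
rewrite mxE; apply: cvK_sum => k; apply: cvK_mulr.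
apply: (cvK_ext (fun s => \sum_j A a j * G s j k)) => [s|].
  by rewrite mxE.
rewrite mxE; apply: cvK_sum => j; exact: cvK_mull.
Qed.

End Dev2.

Module Dev3.
Import HB.structures.
Import mathcomp.boot.all_boot mathcomp.order.all_order mathcomp.algebra.all_algebra.
Import mathcomp.real_closed.complex mathcomp.reals_stdlib.Rstruct.
Import mathcomp.algebra.spectral mathcomp.algebra.sesquilinear.
Import mathcomp.algebra_tactics.ring mathcomp.algebra_tactics.lra.
Import Order.TTheory GRing.Theory Num.Theory Num.Def.
Import Dev Dev2.
Local Open Scope ring_scope.
Local Open Scope complex_scope.

Lemma spec_raw n H : Defs.hermitian n H ->
  exists (P : 'M[K]_n) (lam : 'I_n -> R),
    P *m ct P = 1%:M /\ ct P *m P = 1%:M /\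
    toM H = ct P *m diag_mx (\row_i ((lam i)%:C)) *m P /\ ct (toM H) = toM H :> 'M_n.
Proof.
move=> /meqP; rewrite toM_adj => hH.
have [P [lam [h1 [h2 h3]]]] := @spec _ _ (esym hH).
by exists P, lam; split; [|split; [|split]].
Qed.

Lemma half_half : ((1/2 : R) + 1/2 = 1)%R.
Proof. by rewrite -splitr. Qed.

Lemma mu_zero w x y : Rlt 0 w ->
  (mu (c1 w) (c2 w) c3 x y == 0) = (x == y).
Proof.
move=> hw; case: (eqVneq x y) => [<-|hxy].
  have hre := mu_Re w x x; have him := mu_Im w x x.
  rewrite (mu_R0 _ _ _ half_half) in hre; rewrite mu_I0 in him.
  move: hre him; case: (mu _ _ _ _ _) => re im /= -> ->; exact: eqxx.
apply/negP => /eqP hm.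
have hre := mu_Re w x y; rewrite hm /= in hre.
have := mu_Rneg w x y _ half_half hw (fun e => (negP hxy) (introT eqP e)).
rewrite -hre => /Rlt_irrefl; exact.
Qed.

Lemma delta_zero (x y : R) : ((x%:C - y%:C : K) == 0) = (x == y).
Proof.
rewrite subr_eq0; apply/idP/idP => [/eqP h|/eqP -> //].
by move: h; case=> ->.
Qed.

Lemma gksl_iff n w H rho : Defs.hermitian n H -> Rlt 0 w ->
  (meq n (gksl n w H rho) mzero <-> meq n (Defs.comm n H rho) mzero).
Proof.
move=> hH hw; rewrite !meqP toM_gksl toM_comm toM_mzero.
have [P [lam [h1 [h2 [h3 h4]]]]] := @spec_raw _ _ hH.
have cg := @core_gksl _ _ _ _ h1 h2 h3 h4 (c1 w) (c2 w) c3 (toM rho).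
have cc := @core_comm _ _ _ _ h1 h2 h3 (toM rho).
have ci := @cj_inj _ _ h2.
have key : forall a b, (mu (c1 w) (c2 w) c3 (lam a) (lam b) *
      (P *m toM rho *m ct P) a b == 0) =
   (((lam a)%:C - (lam b)%:C) * (P *m toM rho *m ct P) a b == 0).
  by move=> a b; rewrite !mulf_eq0 mu_zero // delta_zero.
move: cg cc key; move: (P *m toM rho *m ct P) => Y cg cc key.
split => h.
- apply: ci; rewrite cc; apply/matrixP => a b; rewrite !mxE; apply/eqP.
  rewrite -key; move: cg; rewrite h mulmx0 mul0mx => /matrixP /(_ a b).
  by rewrite !mxE => <-.
- apply: ci; rewrite cg; apply/matrixP => a b; rewrite !mxE; apply/eqP.
  rewrite key; move: cc; rewrite h mulmx0 mul0mx => /matrixP /(_ a b).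
  by rewrite !mxE => <-.
Qed.

Lemma ham_iff n H rho :
  (meq n (ham n H rho) mzero <-> meq n (Defs.comm n H rho) mzero).
Proof.
rewrite !meqP /ham toM_mscale toM_mzero.
split => [h|->]; last by rewrite scaler0.
move: h => /eqP; rewrite scaler_eq0 => /orP [/eqP h|/eqP //].
move/(congr1 (@complex.Im _)): h => /= /eqP.
by rewrite oppr_eq0 oner_eq0.
Qed.

End Dev3.

Module Dev4.
Import HB.structures.
Import mathcomp.boot.all_boot mathcomp.order.all_order mathcomp.algebra.all_algebra.
Import mathcomp.real_closed.complex mathcomp.reals_stdlib.Rstruct.
Import mathcomp.algebra.spectral mathcomp.algebra.sesquilinear.
Import mathcomp.algebra_tactics.ring mathcomp.algebra_tactics.lra.
Import Order.TTheory GRing.Theory Num.Theory Num.Def.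
Import Dev Dev2 Dev3.
Local Open Scope ring_scope.
Local Open Scope complex_scope.

Lemma sol_cd n w H rho t (j k : 'I_n) : is_solution n (gksl n w H) rho ->
  cd (fun s => (toM (rho s) : 'M_n) j k) t ((toM (gksl n w H (rho t)) : 'M_n) j k).
Proof.
move=> hs.
have [h1 h2] := hs t j k (elimT ssrnat.ltP (ltn_ord j)) (elimT ssrnat.ltP (ltn_ord k)).
apply: (cd_ext (fun s => phi (rho s j k))) => [s|]; first by rewrite mxE.
rewrite mxE; split; [exact: h1|exact: h2].
Qed.

Lemma Re_mul (x z : K) : complex.Re (x * z) =
  Rminus (Rmult (complex.Re x) (complex.Re z)) (Rmult (complex.Im x) (complex.Im z)).
Proof. by case: x; case: z. Qed.
Lemma Im_mul (x z : K) : complex.Im (x * z) =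
  Rplus (Rmult (complex.Im x) (complex.Re z)) (Rmult (complex.Re x) (complex.Im z)).
Proof. case: x => a b; case: z => c d /=. exact: addrC. Qed.

Lemma cvK_entry n w H rho (P : 'M[K]_n) lam a b :
  Rlt 0 w -> is_solution n (gksl n w H) rho ->
  P *m ct P = 1%:M -> ct P *m P = 1%:M ->
  toM H = ct P *m diag_mx (\row_i ((lam i)%:C)) *m P -> ct (toM H) = toM H :> 'M_n ->
  cvK (fun s => (P *m toM (rho s) *m ct P) a b)
      (if lam a == lam b then (P *m toM (rho 0%R) *m ct P) a b else 0).
Proof.
move=> hw hs h1 h2 h3 h4.
set m := mu (c1 w) (c2 w) c3 (lam a) (lam b).
have hd : forall t, cd (fun s => (P *m toM (rho s) *m ct P) a b) t
                      (m * (P *m toM (rho t) *m ct P) a b).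
  move=> t; apply: (cd_val _ _ ((P *m (toM (gksl n w H (rho t)) : 'M_n) *m ct P) a b)).
    apply: cd_lin => j k; exact: (@sol_cd _ _ _ _ _ _ _ hs).
  by rewrite toM_gksl (@core_gksl _ _ _ _ h1 h2 h3 h4) mxE.
set u := fun s => complex.Re ((P *m toM (rho s) *m ct P) a b).
set v := fun s => complex.Im ((P *m toM (rho s) *m ct P) a b).
have hode : forall t,
  derivable_pt_lim u t (Rminus (Rmult (complex.Re m) (u t)) (Rmult (complex.Im m) (v t))) /\
  derivable_pt_lim v t (Rplus (Rmult (complex.Im m) (u t)) (Rmult (complex.Re m) (v t))).
  move=> t; have [d1 d2] := hd t; split.
  - by move: d1; rewrite Re_mul.
  - by move: d2; rewrite Im_mul.
have [hneg hzero] := ode2_cv u v _ _ hode.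
case: eqP => e.
- have hm : m = 0 by apply/eqP; rewrite /m mu_zero // e.
  have [cu cv'] : p1.cv u (u 0%R) /\ p1.cv v (v 0%R).
    by apply: hzero; rewrite hm; split.
  by split.
- have hm : Rlt (complex.Re m) 0.
    rewrite /m mu_Re; apply: (mu_Rneg _ _ _ _ half_half hw) => e'; exact: e.
  have [cu cv'] := hneg hm.
  by split.
Qed.

Lemma conv_main n w H rho : Defs.hermitian n H -> Rlt 0 w ->
  is_solution n (gksl n w H) rho -> converges n rho.
Proof.
move=> hH hw hs.
case: n hH hs => [|m] hH hs.
  exists mzero => eps _; exists 0%R => t _ i j /ssrnat.ltP //.
have [P [lam [h1 [h2 [h3 h4]]]]] := @spec_raw _ _ hH.
set L := \matrix_(a, b) (if lam a == lam b then (P *m toM (rho 0%R) *m ct P) a b else 0)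
  : 'M[K]_m.+1.
set l := ct P *m L *m P.
have hc : forall a b, cvK (fun s => (toM (rho s) : 'M_m.+1) a b) (l a b).
  move=> a b.
  apply: (cvK_ext (fun s => (ct P *m (P *m toM (rho s) *m ct P) *m P) a b)) => [s|].
    by rewrite !mulmxA h2 mul1mx -mulmxA h2 mulmx1.
  apply: cvK_lin => j k; rewrite mxE; exact: (@cvK_entry _ _ _ _ _ _ _ _ hw hs h1 h2 h3 h4).
exists (fun i j => mkC (complex.Re (l (inord i) (inord j))) (complex.Im (l (inord i) (inord j)))).
move=> eps heps.
pose Lr i j := mkC (complex.Re (l (inord i) (inord j))) (complex.Im (l (inord i) (inord j))).
have hQ : forall i, (i < m.+1)%coq_nat -> exists T, forall j, (j < m.+1)%coq_nat ->
    forall t, Rlt T t -> Rlt (Cnorm (Cadd (rho t i j) (Copp (Lr i j)))) eps.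
  move=> i hi; apply: uniformize.
    move=> j T T' hTT' hq t ht; apply: hq; exact: Rle_lt_trans hTT' ht.
  move=> j hj; have [hr him] := hc (inord i) (inord j).
  have ei : (inord i : 'I_m.+1) = i :> nat by rewrite inordK //; apply/ssrnat.ltP.
  have ej : (inord j : 'I_m.+1) = j :> nat by rewrite inordK //; apply/ssrnat.ltP.
  have hr' : p1.cv (fun s => Defs.Re (rho s i j)) (complex.Re (l (inord i) (inord j))).
    apply: (cv_ext _ _ _ _ hr) => s; by rewrite mxE ei ej.
  have him' : p1.cv (fun s => Defs.Im (rho s i j)) (complex.Im (l (inord i) (inord j))).
    apply: (cv_ext _ _ _ _ him) => s; by rewrite mxE ei ej.
  have [T hT] := cv2_norm _ _ _ _ hr' him' eps heps.
  by exists T => t ht; exact: hT t ht.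
have [T hT] := uniformize (fun i T => forall j, (j < m.+1)%coq_nat ->
    forall t, Rlt T t -> Rlt (Cnorm (Cadd (rho t i j) (Copp (Lr i j)))) eps) (m.+1)
  (fun i T T' hTT' hq j hj t ht => hq j hj t (Rle_lt_trans _ _ _ hTT' ht)) hQ.
by exists T => t ht i j hi hj; exact: hT i hi j hj t ht.
Qed.

End Dev4.

Module Dev5.
Import HB.structures.
Import mathcomp.boot.all_boot mathcomp.order.all_order mathcomp.algebra.all_algebra.
Import mathcomp.real_closed.complex mathcomp.reals_stdlib.Rstruct.
Import mathcomp.algebra.spectral mathcomp.algebra.sesquilinear.
Import mathcomp.algebra_tactics.ring mathcomp.algebra_tactics.lra.
Import Order.TTheory GRing.Theory Num.Theory Num.Def.
Import Dev Dev2 Dev3 Dev4.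
Local Open Scope ring_scope.
Local Open Scope complex_scope.

Lemma ccE (x : K) : conjc x = conjC x.
Proof. reflexivity. Qed.

Definition ofM {m} (M : 'M[K]_m.+1) : Mat :=
  fun i j => mkC (complex.Re (M (inord i) (inord j))) (complex.Im (M (inord i) (inord j))).

Lemma phi_ofM m (M : 'M[K]_m.+1) (i j : 'I_m.+1) : phi (ofM M i j) = M i j.
Proof. by rewrite /ofM /phi /= !inord_val; case: (M i j). Qed.

Lemma toM_ofM m (M : 'M[K]_m.+1) : toM (ofM M) = M.
Proof. apply/matrixP => i j; by rewrite mxE phi_ofM. Qed.

Definition Ek {n} (P : 'M[K]_n) (k : 'I_n) : 'M[K]_n := map_mx conjC (row k P)^T *m row k P.

Lemma EkE n (P : 'M[K]_n) k i j : Ek P k i j = conjC (P k i) * P k j.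
Proof. by rewrite /Ek mxE big_ord1 !mxE. Qed.

Lemma ctE n (M : 'M[K]_n) i j : ct M i j = conjC (M j i).
Proof. by rewrite !mxE. Qed.

Lemma cjEk n (P : 'M[K]_n) k a b : P *m ct P = 1%:M ->
  (P *m Ek P k *m ct P) a b = (a == k)%:R * (k == b)%:R.
Proof.
move=> h1.
have e1 : P *m map_mx conjC (row k P)^T = col k 1%:M.
  apply/matrixP => i j; rewrite -h1 !mxE; apply: eq_bigr => l _; by rewrite !mxE.
have e2 : row k P *m ct P = row k 1%:M by rewrite -h1 row_mul.
rewrite /Ek mulmxA e1 -mulmxA e2 mxE big_ord1 !mxE.
by rewrite eq_sym.
Qed.

Lemma Ek_density m (P : 'M[K]_m.+1) k : P *m ct P = 1%:M -> density m.+1 (ofM (Ek P k)).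
Proof.
move=> h1; split; [|split].
- apply/meqP; rewrite toM_adj toM_ofM; apply/matrixP => i j.
  by rewrite ctE !EkE rmorphM /= conjCK mulrC.
- move=> v.
  change (Rle 0 (complex.Re (phi (Csum m.+1 (fun i => Cmul (Cconj (v i))
     (Csum m.+1 (fun j => Cmul (ofM (Ek P k) i j) (v j)))))))).
  set z := \sum_(j < m.+1) P k j * phi (v j).
  have -> : phi (Csum m.+1 (fun i => Cmul (Cconj (v i))
     (Csum m.+1 (fun j => Cmul (ofM (Ek P k) i j) (v j))))) = conjC z * z.
    rewrite phi_sum rmorph_sum mulr_suml; apply: eq_bigr => i _.
    rewrite phi_mul phi_conj ccE phi_sum /z !mulr_sumr; apply: eq_bigr => j _.
    by rewrite phi_mul phi_ofM EkE rmorphM /=; ring.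
  case: z => a b /=. apply/RleP. by rewrite mulNr opprK -!expr2 addr_ge0 ?sqr_ge0.
- apply: phi_inj; rewrite /trace phi_sum phi_C1.
  transitivity ((P *m ct P) k k); last by rewrite h1 mxE eqxx.
  rewrite mxE; apply: eq_bigr => i _; by rewrite phi_ofM EkE ctE mulrC.
Qed.

Lemma Ek_comm m H (P : 'M[K]_m.+1) lam k :
  P *m ct P = 1%:M -> ct P *m P = 1%:M ->
  toM H = ct P *m diag_mx (\row_i ((lam i)%:C)) *m P ->
  meq m.+1 (Defs.comm m.+1 H (ofM (Ek P k))) mzero.
Proof.
move=> h1 h2 h3; apply/meqP; rewrite toM_comm toM_mzero toM_ofM.
apply: (@cj_inj _ _ h2); rewrite (@core_comm _ _ _ _ h1 h2 h3).
apply/matrixP => a b; rewrite [LHS]mxE cjEk // [RHS]mxE.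
case: (eqVneq a k) => [->|hak]; last by rewrite mulr0n mul0r mulr0.
case: (eqVneq k b) => [<-|hkb]; last by rewrite mulr0n !mulr0.
by rewrite subrr mul0r.
Qed.

Lemma two_states n H : (1 < n)%coq_nat -> Defs.hermitian n H ->
  exists r1 r2, density n r1 /\ density n r2 /\
    meq n (Defs.comm n H r1) mzero /\ meq n (Defs.comm n H r2) mzero /\ ~ meq n r1 r2.
Proof.
case: n => [|[|m]] hn hH; [by move/ssrnat.ltP: hn|by move/ssrnat.ltP: hn|].
have [P [lam [h1 [h2 [h3 h4]]]]] := @spec_raw _ _ hH.
set k1 : 'I_m.+2 := inord 1.
exists (ofM (Ek P ord0)), (ofM (Ek P k1)).
split; first exact: Ek_density.
split; first exact: Ek_density.
split; first exact: Ek_comm h1 h2 h3.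
split; first exact: Ek_comm h1 h2 h3.
move/meqP; rewrite !toM_ofM => e.
have := congr1 (fun M : 'M[K]_m.+2 => (P *m M *m ct P) ord0 ord0) e.
rewrite /= !cjEk // eqxx.
have -> : (ord0 == k1) = false by rewrite /k1; apply/eqP => /(congr1 val) /=; rewrite inordK.
by rewrite mulr1n mulr0n mul0r mulr1 => /eqP; rewrite oner_eq0.
Qed.

End Dev5.


Lemma one_relaxing w H : Defs.hermitian 1 H -> 0 < w -> relaxing 1 (gksl 1 w H).
Proof.
  intros hH hw.
  assert (hd : density 1 (fun _ _ => Defs.C1)).
  { split; [|split].
    - intros i j hi hj. unfold adj, Cconj, Defs.C1; simpl. f_equal. ring.
    - intro v. simpl. destruct (v 0%nat) as [a b]; simpl. nra.
    - unfold trace; simpl. unfold Cadd, Defs.C0, Defs.C1; simpl. f_equal; ring. }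
  exists (fun _ _ => Defs.C1). split.
  - split; auto. apply (proj2 (Dev3.gksl_iff 1 w H _ hH hw)).
    intros i j hi hj. assert (i = 0%nat) by lia. assert (j = 0%nat) by lia. subst.
    unfold Defs.comm, madd, mopp, mmul, mzero; simpl.
    destruct (H 0%nat 0%nat) as [a b]; unfold Cadd, Cmul, Copp, Defs.C0, Defs.C1; simpl. f_equal; ring.
  - intros sigma [[hh [_ ht]] _] i j hi hj.
    assert (i = 0%nat) by lia. assert (j = 0%nat) by lia. subst.
    specialize (hh 0%nat 0%nat hi hi). unfold adj, Cconj in hh.
    unfold trace in ht; simpl in ht.
    destruct (sigma 0%nat 0%nat) as [a b]. unfold Cadd, Defs.C0, Defs.C1 in ht; simpl in ht.
    injection hh as hb. injection ht as ha hb'.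
    unfold Defs.C1. f_equal; lra.
Qed.

Theorem theorem3 (n : nat) (H : Mat) (w : R)
  (hn : (0 < n)%nat) (hH : hermitian n H) (hw : 0 < w <= 1) :
  (forall rho,
     (stationary n (gksl n w H) rho <-> stationary n (ham n H) rho) /\
     (stationary n (ham n H) rho <-> density n rho /\ meq n (comm n H rho) mzero))
  /\
  (forall rho : R -> Mat,
     is_solution n (gksl n w H) rho -> density n (rho 0) -> converges n rho)
  /\
  (~ relaxing n (gksl n w H) <-> (1 < n)%nat).
Proof.
  destruct hw as [hw0 hw1].
  split; [|split].
  - intro rho. split.
    + unfold stationary. split; intros [hd hz]; split; auto.
      * apply (proj2 (Dev3.ham_iff n H rho)). apply (proj1 (Dev3.gksl_iff n w H rho hH hw0)); auto.
      * apply (proj2 (Dev3.gksl_iff n w H rho hH hw0)). apply (proj1 (Dev3.ham_iff n H rho)); auto.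
    + unfold stationary. split; intros [hd hz]; split; auto.
      * apply (proj1 (Dev3.ham_iff n H rho)); auto.
      * apply (proj2 (Dev3.ham_iff n H rho)); auto.
  - intros rho hs _. apply (Dev4.conv_main n w H rho hH hw0 hs).
  - split.
    + intro hnr. destruct (Nat.lt_ge_cases 1 n) as [h|h]; auto.
      exfalso; apply hnr. assert (n = 1%nat) by lia. subst. apply one_relaxing; auto.
    + intros h1 [rho [_ huniq]].
      destruct (Dev5.two_states n H h1 hH) as [r1 [r2 [d1 [d2 [cc1 [cc2 hne]]]]]].
      apply hne. intros i j hi hj.
      assert (s1 : stationary n (gksl n w H) r1).
      { split; auto. apply (proj2 (Dev3.gksl_iff n w H r1 hH hw0)); auto. }
      assert (s2 : stationary n (gksl n w H) r2).
      { split; auto. apply (proj2 (Dev3.gksl_iff n w H r2 hH hw0)); auto. }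
      rewrite (huniq r1 s1 i j hi hj), (huniq r2 s2 i j hi hj). reflexivity.
Qed.
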